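(* Let $\Gamma=(\mathcal{G},\mathcal{I},\boldsymbol{c})$ be a nonatomic routing game with BPR-type cost functions (i.e., there is $\beta\in\mathbb{R}_+$ such that $c_e(x)=t_e+a_ex^{\beta}$ with $t_e,a_e\in\mathbb{R}_+$ for every edge $e$) and a single origin-destination pair. Then there exists a demand-independent optimal toll (DIOT) $\boldsymbol{\tau}$ for $\Gamma$ that satisfies the budget constraint $\sum_{e\in\mathcal{E}}\tau_ex_e\ge0$ for every feasible flow $\boldsymbol{f}$ (for any demand), where $x_e$ is the load induced by $\boldsymbol{f}$.
   Context: A nonatomic routing game $\Gamma=(\mathcal{G},\mathcal{I},\boldsymbol{c})$ consists of a finite directed multigraph $\mathcal{G}=(\mathcal{V},\mathcal{E})$, a finite set $\mathcal{I}$ of origin-destination pairs $i$ with origin $o^i$ and destination $d^i$, and nondecreasing continuous cost functions $c_e:\mathbb{R}_+\to\mathbb{R}_+$. $\mathcal{P}^i$ is the set of simple $o^i$–$d^i$ paths. For a demand vector $\boldsymbol{\mu}\in\mathbb{R}_+^{\mathcal{I}}$, feasible flows are $\boldsymbol{f}\in\mathbb{R}_+^{\mathcal{P}}$ with $\sum_{p\in\mathcal{P}^i}f_p=\mu^i$; loads $x_e=\sum_{p\ni e}f_p$; path costs $c_p=\sum_{e\in p}c_e(x_e)$. A Wardrop equilibrium is a feasible flow where every used path of each pair $i$ has cost at most that of any other path in $\mathcal{P}^i$. The total cost is $L(\boldsymbol{f})=\sum_p f_pc_p(\boldsymbol{f})$; a system optimum minimizes $L$ over feasible flows. For a toll vector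 $\boldsymbol{\tau}\in\mathbb{R}^{\mathcal{E}}$ (entries may be negative), $\Gamma^{\boldsymbol{\tau}}$ has edge costs $c_e(x)+\tau_e$. $\boldsymbol{\tau}$ is a DIOT for $\Gamma$ if for every demand vector $\boldsymbol{\mu}\in\mathbb{R}_+^{\mathcal{I}}$ every Wardrop equilibrium of $\Gamma^{\boldsymbol{\tau}}$ with demand $\boldsymbol{\mu}$ is a system optimum of $\Gamma$ for demand $\boldsymbol{\mu}$. *)

(* Defs.v *)
From HB Require Import structures.
From mathcomp Require Import all_boot all_order all_algebra.
From mathcomp Require Import reals exp.
Set Implicit Arguments. Unset Strict Implicit. Unset Printing Implicit Defensive.
Import Order.TTheory GRing.Theory Num.Theory.
Local Open Scope ring_scope.

Fixpoint allseq (T : Type) (s : seq T) (n : nat) : seq (seq T) :=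
  if n is n'.+1 then [::] :: [seq x :: y | x <- s, y <- allseq s n']
  else [:: [::]].

Section Routing.
Variables (V E : finType) (src tgt : E -> V) (o d : V).

Definition simple_od_path (p : seq E) : bool :=
  if p is e :: p' then
    [&& src e == o, path (fun e1 e2 => tgt e1 == src e2) e p',
        tgt (last e p') == d & uniq (o :: map tgt p)]
  else o == d.

(* The (finite) set P of simple o-d paths; a simple path has at most #|E| edges. *)
Definition odpaths : seq (seq E) :=
  [seq p <- allseq (enum E) #|E| | simple_od_path p].

Variable R : realType.

(* a path flow is f : seq E -> R, only its values on odpaths matter *)
Definition load (f : seq E -> R) (e : E) : R :=
  \sum_(p <- odpaths | e \in p) f p.

Definition path_cost (c : E -> R -> R) (f : seq E -> R) (p : seq E) : R :=
  \sum_(e <- p) c e (load f e).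

Definition feasible (mu : R) (f : seq E -> R) : Prop :=
  (forall p, p \in odpaths -> 0 <= f p) /\ \sum_(p <- odpaths) f p = mu.

Definition wardrop (c : E -> R -> R) (mu : R) (f : seq E -> R) : Prop :=
  feasible mu f /\
  forall p q, p \in odpaths -> q \in odpaths -> 0 < f p ->
    path_cost c f p <= path_cost c f q.

Definition total_cost (c : E -> R -> R) (f : seq E -> R) : R :=
  \sum_(p <- odpaths) f p * path_cost c f p.

Definition system_optimum (c : E -> R -> R) (mu : R) (f : seq E -> R) : Prop :=
  feasible mu f /\ forall g, feasible mu g -> total_cost c f <= total_cost c g.

Definition tolled (c : E -> R -> R) (tau : E -> R) : E -> R -> R :=
  fun e x => c e x + tau e.

Definition DIOT (c : E -> R -> R) (tau : E -> R) : Prop :=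
  forall mu : R, 0 <= mu -> forall f, wardrop (tolled c tau) mu f -> system_optimum c mu f.

End Routing.

Definition bpr (R : realType) (E : Type) (beta : R) (t a : E -> R) : E -> R -> R :=
  fun e x => t e + a e * powR x beta.

(* Main.v *)
Require Import Defs.
From HB Require Import structures.
From mathcomp Require Import all_boot all_order all_algebra.
From mathcomp Require Import reals exp.
From mathcomp Require Import ring lra.
Import Order.TTheory GRing.Theory Num.Theory.
Set Implicit Arguments. Unset Strict Implicit.
Local Open Scope ring_scope.
Lemma key_ineq (R : realType) (beta x y : R) : 0 <= beta -> 0 <= x -> 0 <= y ->
  (beta + 1) * powR x beta * y <= y * powR y beta + beta * (x * powR x beta).
Proof.
move=> b0 x0 y0.
have [->|bpos] := eqVneq beta 0.
  by rewrite !powRr0; lra.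
have bgt : 0 < beta by rewrite lt_def bpos b0.
have p0 : 0 < beta + 1 by lra.
have q0 : 0 < (beta + 1) / beta by rewrite divr_gt0.
have H := @conjugate_powR R y (powR x beta) (beta + 1) ((beta + 1) / beta)
  y0 (powR_ge0 _ _) p0 q0.
have pq : (beta + 1)^-1 + ((beta + 1) / beta)^-1 = 1.
  by field; apply/andP; split => //; rewrite gt_eqF.
have {H} := H pq.
rewrite -powRrM.
have -> : beta * ((beta + 1) / beta) = beta + 1 by field.
rewrite -!(@mulr_powRB1 R _ (beta + 1)) // addrK => H.
have E : y * powR y beta / (beta + 1) + x * powR x beta / ((beta + 1) / beta)
   = (y * powR y beta + beta * (x * powR x beta)) / (beta + 1).
  by field; apply/andP; split => //; rewrite gt_eqF.
rewrite E in H.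
have := ler_wpM2l (ltW p0) H.
rewrite mulrCA mulrA [X in _ <= X -> _]mulrC divfK ?gt_eqF //.
by have -> : y * (beta + 1) * powR x beta = (beta + 1) * powR x beta * y by ring.
Qed.
Section Paths.
Variables (V E : finType) (src tgt : E -> V) (o d : V).
Local Notation P := (odpaths src tgt o d).

Lemma odpath_simple p : p \in P -> simple_od_path src tgt o d p.
Proof. by rewrite mem_filter => /andP[]. Qed.

Lemma odpath_uniq p : p \in P -> uniq p.
Proof.
move/odpath_simple; case: p => [|e p] //= /and4P[_ _ _].
move=> u; apply: (@map_uniq _ _ tgt (e :: p)); by case/andP: u.
Qed.

Lemma odpath_nil p : p \in P -> (p == [::]) = (o == d).
Proof.
move/odpath_simple; case: p => [|e p] /=; first by move=> ->.
move=> /and4P[_ _ /eqP hd /andP[ho _]].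
apply/esym/negbTE; apply: contra ho => /eqP ->.
rewrite -hd -last_map; exact: mem_last.
Qed.

Lemma odpath_count p : p \in P -> count (fun e => tgt e == d) p = (o != d).
Proof.
move=> pP; have := odpath_nil pP.
move: pP => /odpath_simple; case: p => [|e p] /=; first by move=> /eqP -> _; rewrite eqxx.
move=> /and4P[_ _ /eqP hd /andP[ho u]] /esym/negbT ond; rewrite ond.
have := @count_uniq_mem _ (tgt e :: map tgt p) d u.
rewrite -hd -[tgt e :: _]/(map tgt (e :: p)) -last_map mem_last /= => <-.
by rewrite count_map.
Qed.

Variable R : realType.

Lemma sum_indicator (s : seq E) (b : pred E) :
  \sum_(e <- s) (b e)%:R = (count b s)%:R :> R.
Proof.
elim: s => [|x s IH]; first by rewrite big_nil.
by rewrite big_cons IH /= natrD.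
Qed.

Lemma path_to_edge (w : E -> R) (f : seq E -> R) :
  \sum_(p <- P) f p * \sum_(e <- p) w e = \sum_(e : E) w e * load src tgt o d f e.
Proof.
rewrite big_seq.
under eq_bigr => p pP.
  rewrite (big_uniq _ (odpath_uniq pP)) mulr_sumr big_mkcond /=.
  over.
rewrite /= exchange_big /=; apply: eq_bigr => e _.
rewrite /load mulr_sumr big_mkcond [RHS]big_mkcond /= [RHS]big_seq.
rewrite [RHS]big_mkcond; apply: eq_bigr => p _; case: (p \in P) => //; case: (e \in p) => //; by rewrite mulrC.
Qed.

Lemma feas0 (f : seq E -> R) : feasible src tgt o d 0 f -> forall p, p \in P -> f p = 0.
Proof.
move=> [f0 fs] p pP.
have : \sum_(q <- P | q \in P) f q == 0 by rewrite -big_seq fs.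
rewrite psumr_eq0; last by move=> q /f0.
by move/allP => /(_ p pP); rewrite pP => /eqP.
Qed.

Lemma feas_ge0 mu (f : seq E -> R) : feasible src tgt o d mu f -> 0 <= mu.
Proof.
move=> [f0 <-]; rewrite big_seq; apply: sumr_ge0 => p; exact: f0.
Qed.

Lemma wardrop_sum (mu : R) (f g : seq E -> R) (C : seq E -> R) :
  feasible src tgt o d mu f -> feasible src tgt o d mu g ->
  (forall p q, p \in P -> q \in P -> 0 < f p -> C p <= C q) ->
  \sum_(p <- P) f p * C p <= \sum_(p <- P) g p * C p.
Proof.
move=> Ff Fg W.
have := feas_ge0 Ff; rewrite le_eqVlt => /orP[/eqP mu0|mupos].
  rewrite -mu0 in Ff Fg.
  rewrite big_seq [X in _ <= X]big_seq.
  rewrite big1 ?big1 // => p pP; by rewrite ?(feas0 Ff pP) ?(feas0 Fg pP) mul0r.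
move: (Ff) (Fg) => [f0 fs] [g0 gs].
rewrite -(ler_pM2l mupos).
rewrite -{1}gs mulr_suml -fs mulr_suml.
under eq_bigr => q _ do rewrite mulr_sumr.
under [X in _ <= X]eq_bigr => p _ do rewrite mulr_sumr.
rewrite [X in _ <= X]exchange_big /=.
rewrite big_seq [X in _ <= X]big_seq; apply: ler_sum => q qP.
rewrite big_seq [X in _ <= X]big_seq; apply: ler_sum => p pP.
rewrite [X in _ <= X]mulrCA; apply: ler_wpM2l; first exact: g0.
have := f0 p pP; rewrite le_eqVlt => /orP[/eqP <-|fp]; first by rewrite !mul0r.
by apply: ler_wpM2l; [exact: ltW | exact: W].
Qed.

End Paths.

Lemma edge_ineq (R : realType) (beta t a x y : R) :
  0 <= beta -> 0 <= t -> 0 <= a -> 0 <= x -> 0 <= y ->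
  (t + (beta + 1) * a * powR x beta) * (y - x) <=
  (t + a * powR y beta) * y - (t + a * powR x beta) * x.
Proof.
move=> b0 t0 a0 x0 y0; have K := key_ineq b0 x0 y0.
rewrite -subr_ge0.
have -> : (t + a * powR y beta) * y - (t + a * powR x beta) * x -
  (t + (beta + 1) * a * powR x beta) * (y - x) =
  a * (y * powR y beta + beta * (x * powR x beta) - (beta + 1) * powR x beta * y)
  by ring.
by apply: mulr_ge0 => //; rewrite subr_ge0.
Qed.

Theorem corollary10 (R : realType) (V E : finType) (src tgt : E -> V) (o d : V)
    (beta : R) (t a : E -> R) :
  0 <= beta -> (forall e, 0 <= t e) -> (forall e, 0 <= a e) ->
  exists tau : E -> R,
    DIOT src tgt o d (bpr beta t a) tau /\
    (forall (mu : R) (f : seq E -> R), 0 <= mu -> feasible src tgt o d mu f ->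
       0 <= \sum_(e : E) tau e * load src tgt o d f e).
Proof.
move=> b0 t0 a0.
set M := \sum_(e : E) t e.
have M0 : 0 <= M by apply: sumr_ge0.
set k := beta / (beta + 1).
have bp1 : 0 < beta + 1 by lra.
have k1 : 0 <= 1 - k.
  have -> : 1 - k = (beta + 1)^-1 by rewrite /k; field; rewrite gt_eqF.
  by rewrite invr_ge0 ltW.
have k0 : 0 <= k by rewrite /k divr_ge0 // ltW.
exists (fun e => - k * t e + M * (tgt e == d)%:R).
split.
  move=> mu mu0 f [Ff Wf]; split => // g Fg.
  set c := bpr beta t a.
  set tau := (fun e => - k * t e + M * (tgt e == d)%:R).
  set x := load src tgt o d f.
  set y := load src tgt o d g.
  have x0 : forall e, 0 <= x e.
    move=> e; rewrite /x /load big_seq_cond; apply: sumr_ge0 => p /andP[pP _].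
    exact: Ff.1.
  have y0 : forall e, 0 <= y e.
    move=> e; rewrite /y /load big_seq_cond; apply: sumr_ge0 => p /andP[pP _].
    exact: Fg.1.
  set W := fun e => tolled c tau e (x e).
  set I := fun e : E => ((tgt e == d)%:R : R).
  have H1 : \sum_e W e * x e <= \sum_e W e * y e.
    rewrite -!path_to_edge; apply: wardrop_sum Ff Fg _ => p q pP qP fp.
    exact: Wf.
  have H2 : \sum_e I e * x e = \sum_e I e * y e.
    rewrite -!path_to_edge big_seq [RHS]big_seq.
    under eq_bigr => p pP do rewrite /I sum_indicator (odpath_count pP).
    under [RHS]eq_bigr => p pP do rewrite /I sum_indicator (odpath_count pP).
    by rewrite -!big_seq -!mulr_suml Ff.2 Fg.2.
  have H3 : forall e, (beta + 1) * (W e * y e - W e * x e)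
      - (beta + 1) * M * (I e * y e - I e * x e) <= c e (y e) * y e - c e (x e) * x e.
    move=> e.
    have -> : (beta + 1) * (W e * y e - W e * x e)
      - (beta + 1) * M * (I e * y e - I e * x e) =
      (t e + (beta + 1) * a e * powR (x e) beta) * (y e - x e).
      rewrite /W /I /tolled /tau /c /bpr /k; field; by rewrite gt_eqF.
    exact: edge_ineq.
  rewrite /total_cost /path_cost.
  rewrite (@path_to_edge _ _ src tgt o d _ (fun e => c e (x e))) (@path_to_edge _ _ src tgt o d _ (fun e => c e (y e))).
  rewrite -subr_ge0 -sumrB; apply: le_trans (ler_sum _ (fun e _ => H3 e)).
  rewrite sumrB -!mulr_sumr !sumrB H2 subrr mulr0 subr0.
  by apply: mulr_ge0; [exact: ltW | rewrite subr_ge0].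
move=> mu f mu0 Ff.
rewrite -path_to_edge big_seq; apply: sumr_ge0 => p pP.
apply: mulr_ge0; first exact: Ff.1.
have := odpath_nil pP; case: (eqVneq o d) => [eod|nod] hnil.
  have /eqP -> : p == [::] by rewrite hnil.
  by rewrite big_nil.
rewrite big_split /= -!mulr_sumr sum_indicator (odpath_count pP) nod /= mulr1.
set S := \sum_(e <- p) t e.
have S0 : 0 <= S by apply: sumr_ge0.
have SM : S <= M.
  rewrite /S /M (big_uniq _ (odpath_uniq pP)) [leRHS](bigID (mem p)) /= lerDl.
  by apply: sumr_ge0.
have : 0 <= (1 - k) * S by apply: mulr_ge0.
lra.
Qed.
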